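(* Let $\alpha\in(0,1]$, let $k\in\{0,1,\dots,m-1\}$, and let $\vec r=(r_1,\dots,r_{k+1},0,\dots,0)\in\mathbb R_{\ge0}^m$ with $\sum_{i=1}^{k+1}r_i=1$. Let $\mathcal E=(N,A,\vec\sigma)$ be an election with $m$ alternatives whose profile is moderate-up-to-$k$. Let $a^*$ be any alternative selected by the Positional Scoring Matching rule $\mathrm{PSM}_{\vec r}$ on $\vec\sigma$. Then $$\mathsf{dist}_\alpha(a^*,\mathcal E)\le 2+\max\left(\alpha,\ \max_{j\in[k+1]}\Big(\sum_{i\in[k+1],\,i\ne j} r_i\max(1,\alpha^{j-i})\Big)-r_j\right).$$
   Context: An election $\mathcal E=(N,A,\vec\sigma)$ has $n$ agents $N$, $m$ alternatives $A$, and $\sigma_i=(\pi_i,\Join_i)$ with $\pi_i:[m]\to A$ a bijection ($\pi_i(1)$ most preferred) and $\Join_i:[m-1]\to\{\succ,\succ\!\!\succ\}$. Write $\mathrm{rank}_i(a)=\pi_i^{-1}(a)$ and $a\succ_i c$ if $\mathrm{rank}_i(a)<\mathrm{rank}_i(c)$. A metric $d$ on $N\cup A$ is nonnegative and symmetric, satisfies the triangle inequality, and has $d(x,x)=0$. The profile $\vec\sigma$ is $\alpha$-consistent with $d$ (mandatory elicitation) if for all $i$ and $j\in[m-1]$: - $\Join_i(j)=\,\succ$ implies $d(i,\pi_i(j+1))\ge d(i,\pi_i(j))>\alpha d(i,\pi_i(j+1))$; - $\Join_i(j)=\,\succ\!\!\succ$ implies $d(i,\pi_i(j))\le\alpha d(i,\pi_i(j+1))$.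 $\mathsf{dist}_\alpha(a,\mathcal E)=\sup_d \sum_i d(i,a)/\min_{b}\sum_i d(i,b)$, with the supremum over $\alpha$-consistent $d$. A preference $(\pi,\Join)$ is moderate-up-to-$k$ if $\Join(k+1)=\,\succ\!\!\succ$ and $\Join(i)=\,\succ$ for all $i\in[k]$. A preference with no $\succ\!\!\succ$ is moderate-up-to-$(m-1)$. A profile is moderate-up-to-$k$ if all agents' preferences are. For $\vec p\in\Delta(N)$, $\vec q\in\Delta(A)$ and $a\in A$, the $(\vec p,\vec q)$-domination graph of $a$ is the bipartite graph on $N\cup A$ with an edge $(i,c)$ iff $a\succ_i c$ or $c=a$; agent $i$ has weight $p(i)$ and alternative $c$ has weight $q(c)$. It admits a fractional perfect matching if there are nonnegative edge weights $w$ with $\sum_{c:(i,c)\text{ edge}}w(i,c)=p(i)$ for every $i$ and $\sum_{i:(i,c)\text{ edge}}w(i,c)=q(c)$ for every $c$. The rule $\mathrm{PSM}_{\vec r}$ sets $p(i)=1/n$ and $q(c)=\frac1n\sum_{i\in N}r_{\mathrm{rank}_i(c)}$. It selects an alternative whose $(\vec p,\vec q)$-domination graph admits a fractional perfect matching; such an alternative always exists. *)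

(* Defs.v *)
From mathcomp Require Import all_boot all_order all_algebra all_fingroup.
Set Implicit Arguments. Unset Strict Implicit. Unset Printing Implicit Defensive.
Import Order.TTheory GRing.Theory Num.Theory.
Local Open Scope ring_scope.

(* Conventions (0-based): agents are 'I_n, alternatives are 'I_m,
   positions in a ranking are 'I_m (position 0 = most preferred).
   A profile is given by
     pi : 'I_n -> {perm 'I_m}     (pi i j = alternative at position j of agent i)
     J  : 'I_n -> nat -> bool     (J i j = true  iff  Join_i(j+1) = ">>",
                                   J i j = false iff  Join_i(j+1) = ">",
                                   only meaningful for j.+1 < m). *)

Section Election.
Variables (R : realFieldType) (n m : nat).

Definition pt := ('I_n + 'I_m)%type.

Definition rank (pi : 'I_n -> {perm 'I_m}) (i : 'I_n) (a : 'I_m) : 'I_m :=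
  ((pi i)^-1)%g a.

Definition is_metric (d : pt -> pt -> R) : Prop :=
  [/\ (forall x y, 0 <= d x y),
      (forall x y, d x y = d y x),
      (forall x y z, d x z <= d x y + d y z) &
      (forall x, d x x = 0)].

Definition consistent (alpha : R) (pi : 'I_n -> {perm 'I_m})
    (J : 'I_n -> nat -> bool) (d : pt -> pt -> R) : Prop :=
  forall (i : 'I_n) (j j1 : 'I_m), j1 = j.+1 :> nat ->
    let dj  := d (inl i) (inr (pi i j)) in
    let dj1 := d (inl i) (inr (pi i j1)) in
    (J i j = false -> dj <= dj1 /\ alpha * dj1 < dj) /\
    (J i j = true -> dj <= alpha * dj1).

Definition cost (d : pt -> pt -> R) (a : 'I_m) : R :=
  \sum_(i < n) d (inl i) (inr a).

(* dist_alpha(a, E) <= c, i.e. sup over alpha-consistent metrics d of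
   cost(a)/min_b cost(b) is at most c (stated multiplicatively). *)
Definition distortion_le (alpha : R) (pi : 'I_n -> {perm 'I_m})
    (J : 'I_n -> nat -> bool) (a : 'I_m) (c : R) : Prop :=
  forall d : pt -> pt -> R, is_metric d -> consistent alpha pi J d ->
    forall b : 'I_m, cost d a <= c * cost d b.

(* Moderate-up-to-k (0-based: Join(j+1) = ">" for j < k, Join(k+1) = ">>"
   when k+1 <= m-1; for k = m-1 this means there is no ">>"). *)
Definition moderate_pref (k : nat) (Ji : nat -> bool) : Prop :=
  (forall j, (j < k)%N -> Ji j = false) /\ ((k.+1 < m)%N -> Ji k = true).

Definition moderate_profile (k : nat) (J : 'I_n -> nat -> bool) : Prop :=
  forall i, moderate_pref k (J i).

Definition dom_edge (pi : 'I_n -> {perm 'I_m}) (a : 'I_m) (i : 'I_n) (c : 'I_m)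
  : bool := (rank pi i a < rank pi i c)%N || (c == a).

Definition admits_frac_pm (pi : 'I_n -> {perm 'I_m}) (a : 'I_m)
    (p : 'I_n -> R) (q : 'I_m -> R) : Prop :=
  exists w : 'I_n -> 'I_m -> R,
    [/\ (forall i c, 0 <= w i c),
        (forall i, \sum_(c < m | dom_edge pi a i c) w i c = p i) &
        (forall c, \sum_(i < n | dom_edge pi a i c) w i c = q c)].

Definition psm_p (i : 'I_n) : R := n%:R^-1.
Definition psm_q (pi : 'I_n -> {perm 'I_m}) (r : 'I_m -> R) (c : 'I_m) : R :=
  n%:R^-1 * \sum_(i < n) r (rank pi i c).

Definition psm_selects (pi : 'I_n -> {perm 'I_m}) (r : 'I_m -> R) (a : 'I_m)
  : Prop := admits_frac_pm pi a psm_p (psm_q pi r).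

Definition lemma3_bound (alpha : R) (k : nat) (r : 'I_m -> R) : R :=
  2 + \big[Num.max/alpha]_(j < m | (j <= k)%N)
        ((\sum_(i < m | ((i <= k)%N && (i != j)))
            r i * Num.max 1 (alpha ^ (j%:Z - i%:Z))) - r j).

End Election.

(* Main.v *)
Require Import Defs.
From mathcomp Require Import all_boot all_order all_algebra all_fingroup.
From mathcomp Require Import zify ring lra.
Import Order.TTheory GRing.Theory Num.Theory.
Local Open Scope ring_scope.

Section H.
Variables (R : realFieldType) (n m : nat) (alpha : R) (pi : 'I_n -> {perm 'I_m})
  (J : 'I_n -> nat -> bool) (d : pt n m -> pt n m -> R).
Hypotheses (a0 : 0 < alpha) (a1 : alpha <= 1) (dm : is_metric d)
  (dc : consistent alpha pi J d).

Definition g i (j : 'I_m) := d (inl i) (inr (pi i j)).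

Lemma g_ge0 i j : 0 <= g i j.
Proof. by case: dm => h _ _ _; apply: h. Qed.

Lemma g_step i (j j1 : 'I_m) : j1 = j.+1 :> nat -> g i j <= g i j1.
Proof.
move=> E; have [h1 h2] := dc i j j1 E; have := g_ge0 i j1; rewrite /g.
case: (J i j) h1 h2 => h1 h2.
- move=> hy; exact: le_trans (h2 erefl) (ler_piMl hy a1).
- by case: (h1 erefl).
Qed.

Lemma g_stepJ i (j j1 : 'I_m) : j1 = j.+1 :> nat -> J i j = false ->
  alpha * g i j1 <= g i j.
Proof. move=> E hJ; have [h1 _] := dc i j j1 E; case: (h1 hJ) => _ /ltW; done. Qed.

Lemma g_mono i (j j' : 'I_m) : (j <= j')%N -> g i j <= g i j'.
Proof.
move=> le; move: (j' - j)%N (subnK le) => kk; elim: kk j' {le} => [|kk IH] j' E.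
  by have -> : j' = j by apply: val_inj => /=; lia.
have hl : (kk + j < m)%N by have := ltn_ord j'; lia.
apply: le_trans (IH (Ordinal hl) erefl) _; apply: g_step => /=; lia.
Qed.

Lemma g_chain i kk (j j' : 'I_m) : j' = (kk + j)%N :> nat ->
  (forall l, (j <= l < j')%N -> J i l = false) -> alpha ^+ kk * g i j' <= g i j.
Proof.
elim: kk j' => [|kk IH] j' E hJ.
  by rewrite expr0 mul1r; have -> : j' = j by apply: val_inj => /=; lia.
have hl : (kk + j < m)%N by have := ltn_ord j'; lia.
have hJ' : forall l, (j <= l < Ordinal hl)%N -> J i l = false.
  move=> l /= hl'; apply: hJ; lia.
have := IH (Ordinal hl) erefl hJ'.
have := g_stepJ i (Ordinal hl) j' ltac:(simpl; lia) (hJ (kk + j)%N ltac:(apply/andP; split; lia)).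
rewrite exprSr -mulrA => h1 h2; apply: le_trans h2; apply: ler_wpM2l => //.
exact: exprn_ge0 (ltW a0).
Qed.


Lemma bigmax_ge (T : eqType) (s : seq T) (P : pred T) (F : T -> R) x0 :
  x0 <= \big[Num.max/x0]_(i <- s | P i) F i /\
  (forall j, j \in s -> P j -> F j <= \big[Num.max/x0]_(i <- s | P i) F i).
Proof.
elim: s => [|x s [IH1 IH2]]; first by rewrite big_nil.
rewrite big_cons; split.
  by case: ifP => _ //; rewrite le_max IH1 orbT.
move=> j; rewrite in_cons => /orP [/eqP -> Pj | js Pj].
  by rewrite Pj le_max lexx.
by case: ifP => _; rewrite ?le_max IH2 ?orbT.
Qed.

Variables (k : nat) (r : 'I_m -> R).
Hypotheses (r0 : forall i, 0 <= r i) (rk : forall i : 'I_m, (k < i)%N -> r i = 0)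
  (r1 : \sum_(i < m | (i <= k)%N) r i = 1) (hk : (k < m)%N)
  (hmod : moderate_profile m k J).

Lemma agent i (b : 'I_m) :
  \sum_(j < m) r j * d (inr b) (inr (pi i j)) <=
  (lemma3_bound alpha k r - 1) * d (inl i) (inr b).
Proof.
case: dm => dpos dsym dtri d0.
set t := rank pi i b.
have hb : pi i t = b by rewrite /t /rank permKV.
set D := d (inl i) (inr b).
have hD : D = g i t by rewrite /g hb.
have D0 : 0 <= D by apply: dpos.
have tri j : d (inr b) (inr (pi i j)) <= D + g i j.
  by have := dtri (inr b) (inl i) (inr (pi i j)); rewrite (dsym (inr b) (inl i)).
rewrite /lemma3_bound.
set big := \big[Num.max/alpha]_(j < m | (j <= k)%N) _.
have [bigA bigF] := bigmax_ge _ (index_enum 'I_m) (fun j : 'I_m => (j <= k)%N)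
  (fun j : 'I_m => (\sum_(i < m | ((i <= k)%N && (i != j)))
            r i * Num.max 1 (alpha ^ (j%:Z - i%:Z))) - r j) alpha.
rewrite (bigID (fun j : 'I_m => (j <= k)%N)) /=.
rewrite [X in _ + X]big1 ?addr0; last first.
  by move=> j; rewrite -ltnNge => /rk ->; rewrite mul0r.
case: (leqP t k) => tk.
- rewrite (bigD1 t) //= hb d0 mulr0 add0r.
  set S := \sum_(i0 < m | (i0 <= k)%N && (i0 != t)) r i0 * Num.max 1 (alpha ^ (t%:Z - i0%:Z)).
  have hS : S - r t <= big by apply: bigF => //; apply: mem_index_enum.
  have hr : r t + \sum_(j < m | (j <= k)%N && (j != t)) r j = 1.
    by have hr := r1; rewrite (bigD1 t) in hr.
  apply: (@le_trans _ _ (\sum_(j < m | (j <= k)%N && (j != t)) (r j * D +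
       r j * Num.max 1 (alpha ^ (t%:Z - j%:Z)) * D))).
    apply: ler_sum => j /andP [jk jt].
    rewrite -mulrA -mulrDr; apply: ler_wpM2l => //.
    apply: le_trans (tri j) _; apply: lerD => //.
    case: (ltnP j t) => jt'.
      rewrite hD; apply: le_trans (g_mono i _ _ (ltnW jt')) _.
      by rewrite -hD ler_peMl // le_max lexx.
    have jt2 : (t < j)%N by rewrite ltn_neqAle eq_sym jt jt'.
    set kk := (j - t)%N.
    have hc := g_chain i kk t j ltac:(rewrite /kk; lia)
      (fun l hl => (hmod i).1 l ltac:(lia)).
    have -> : (t%:Z - j%:Z = - (kk%:Z))%R by rewrite /kk; lia.
    rewrite -exprnN.
    have ak : 0 < alpha ^+ kk by apply: exprn_gt0.
    apply: (@le_trans _ _ ((alpha ^+ kk)^-1 * D)).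
      rewrite -[g i j](mulKf (lt0r_neq0 ak)) ler_wpM2l //.
        by rewrite invr_ge0 ltW.
      by rewrite hD.
    by apply: ler_wpM2r => //; rewrite le_max lexx orbT.
  rewrite big_split /= -!mulr_suml -/S.
  have -> : \sum_(j < m | (j <= k)%N && (j != t)) r j = 1 - r t by rewrite -hr; ring.
  nra.
- have k1m : (k.+1 < m)%N by apply: leq_ltn_trans tk (ltn_ord t).
  have hJk : J i k = true by apply: (hmod i).2.
  have hkk := (dc i (Ordinal hk) (Ordinal k1m) erefl).2 hJk.
  rewrite -/(g i (Ordinal hk)) -/(g i (Ordinal k1m)) in hkk.
  have hk1 : g i (Ordinal k1m) <= D by rewrite hD; apply: g_mono.
  apply: (@le_trans _ _ (\sum_(j < m | (j <= k)%N) r j * ((1 + alpha) * D))).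
    apply: ler_sum => j jk; apply: ler_wpM2l => //.
    apply: le_trans (tri j) _; rewrite mulrDl mul1r lerD2l.
    apply: le_trans (g_mono i j (Ordinal hk) jk) _.
    apply: le_trans hkk _; apply: ler_wpM2l => //; exact: ltW.
  rewrite -mulr_suml r1 mul1r.
  have bA : alpha <= big := bigA.
  apply: ler_wpM2r => //; lra.
Qed.

End H.

Theorem lemma3 (R : realFieldType) (n m : nat) (alpha : R) (k : nat)
    (r : 'I_m -> R) (pi : 'I_n -> {perm 'I_m}) (J : 'I_n -> nat -> bool)
    (astar : 'I_m) :
  0 < alpha -> alpha <= 1 ->
  (k < m)%N ->
  (forall i, 0 <= r i) ->
  (forall i : 'I_m, (k < i)%N -> r i = 0) ->
  \sum_(i < m | (i <= k)%N) r i = 1 ->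
  moderate_profile m k J ->
  psm_selects pi r astar ->
  distortion_le alpha pi J astar (lemma3_bound alpha k r).
Proof.
move=> a0 a1 hk r0 rk r1 hmod [w [w0 wp wq]] d dm dc b.
have dm' := dm; case: dm' => dpos dsym dtri d0.
set B := lemma3_bound alpha k r.
have hag i := @agent _ _ _ _ _ _ _ a0 a1 dm dc _ _ r0 rk r1 hk hmod i b.
have [n0|npos] := eqVneq n 0%N.
  rewrite /cost !big1 ?mulr0 // => i _; by move: (ltn_ord i); rewrite {2}n0.
set ninv := (n%:R : R)^-1.
have ninv0 : 0 < ninv by rewrite invr_gt0 ltr0n lt0n.
have hre i : \sum_(c < m) r (rank pi i c) * d (inr b) (inr c) =
    \sum_(j < m) r j * d (inr b) (inr (pi i j)).
  rewrite (reindex_inj (@perm_inj _ (pi i))) /=.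
  by apply: eq_bigr => j _; rewrite /rank permK.
have hedge i c : dom_edge pi astar i c ->
    d (inl i) (inr astar) <= d (inl i) (inr c).
  case/orP => [lt | /eqP -> //].
  have := @g_mono _ _ _ _ _ _ _ a0 a1 dm dc i _ _ (ltnW lt); by rewrite /g /rank !permKV.
have step1 : ninv * cost d astar <=
    ninv * cost d b + ninv * \sum_(i < n) \sum_(c < m) r (rank pi i c) * d (inr b) (inr c).
  rewrite /cost mulr_sumr.
  apply: (@le_trans _ _ (\sum_(i < n) \sum_(c < m | dom_edge pi astar i c)
      (w i c * d (inl i) (inr b) + w i c * d (inr b) (inr c)))).
    apply: ler_sum => i _.
    have -> : ninv * d (inl i) (inr astar) =
        \sum_(c < m | dom_edge pi astar i c) w i c * d (inl i) (inr astar).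
      by rewrite -mulr_suml wp.
    apply: ler_sum => c hc; rewrite -mulrDr; apply: ler_wpM2l => //.
    apply: le_trans (hedge i c hc) _; exact: dtri.
  under eq_bigr do rewrite big_split /=.
  rewrite big_split /= mulr_sumr; apply: lerD.
    apply: ler_sum => i _; rewrite -mulr_suml wp /psm_p; done.
  under eq_bigr do rewrite big_mkcond.
  rewrite exchange_big /=.
  under eq_bigr do rewrite -big_mkcond /= -mulr_suml wq /psm_q.
  rewrite exchange_big mulr_sumr; apply: ler_sum => c _.
  rewrite -mulrA mulr_suml; done.
have step2 : \sum_(i < n) \sum_(c < m) r (rank pi i c) * d (inr b) (inr c) <=
    (B - 1) * cost d b.
  rewrite /cost mulr_sumr; apply: ler_sum => i _; rewrite hre; exact: hag.
have : ninv * cost d astar <= ninv * (B * cost d b).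
  apply: le_trans step1 _.
  rewrite -mulrDr ler_wpM2l ?(ltW ninv0) //.
  have -> : B * cost d b = cost d b + (B - 1) * cost d b by ring.
  by rewrite lerD2l.
by rewrite ler_pM2l.
Qed.
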